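(* Let $N$ be an NFA, let $L_0$ be a forward-admissible initial partition of its vertex set, let $L$ be the partition output by the forward refinement algorithm started from $L_0$, and let $\sim$ be the equivalence relation whose classes are the sets of $L$. Then $\sim$ refines $\sim_{\mathrm{fwd}}$, i.e. $v\sim w$ implies $v\sim_{\mathrm{fwd}}w$.
   Context: An NFA $N$ over a finite alphabet $A$ consists of a finite vertex set $V$, a starting vertex $v_s\in V$, accepting action sets for the vertices, and a set of labeled edges $v\xrightarrow{\lambda}w$ with $v,w\in V$ and $\lambda\in A\cup\{\varepsilon\}$. For a vertex $u$ and a finite sequence $\tau=\tau_1\cdots\tau_r$ ($r\ge0$) with $\tau_i\in A\cup\{\varepsilon\}$, a vertex $w$ is reachable from $u$ on $\tau$ if there are vertices $u=v_1,\dots,v_{r+1}=w$ with an edge $v_i\xrightarrow{\tau_i}v_{i+1}$ for each $i$. Vertices $v_1,v_2$ are forward-equivalent, $v_1\sim_{\mathrm{fwd}}v_2$, if for every finite sequence $\tau$ over $A\cup\{\varepsilon\}$, $v_1$ is reachable from $v_s$ on $\tau$ iff $v_2$ is. A partition $L_0$ of $V$ is a forward-admissible initial partition if $\{v_s\}\in L_0$. Refining a partition $P$ of $V$ by a subset $Y\subseteq V$ means replacing $P$ by the nonempty sets among $\{B\cap Y, B\setminus Y : B\in P\}$. Forward refinement algorithm: given $L_i$, for each $Z\in L_i$ and each $\sigma\in A\cup\{\varepsilon\}$ let $Z[\sigma]=\{z\in V: z'\xrightarrow{\sigma}z\text{ for some }z'\in Z\}$; $L_{i+1}$ is obtained from $L_i$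 by refining successively by all these sets $Z[\sigma]$. Repeat until $L_{i+1}=L_i$ and output this converged partition $L$. *)

(* Defs.v *)
From mathcomp Require Import all_boot.
Set Implicit Arguments. Unset Strict Implicit. Unset Printing Implicit Defensive.

(* An NFA over alphabet A with vertex set V: labels are [option A],
   [None] standing for epsilon; [e v l w] means there is an edge v -l-> w. *)
Section NFA.
Variables (A V : finType) (e : V -> option A -> V -> bool).

Fixpoint reachable (u : V) (tau : seq (option A)) (w : V) : bool :=
  match tau with
  | [::] => u == w
  | l :: tau' => [exists v, e u l v && reachable v tau' w]
  end.

Definition fwd_equiv (vs v1 v2 : V) : Prop :=
  forall tau : seq (option A), reachable vs tau v1 = reachable vs tau v2.

Definition refine_by (P : {set {set V}}) (Y : {set V}) : {set {set V}} :=
  ([set B :&: Y | B in P] :|: [set B :\: Y | B in P]) :\ set0.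

Definition succ_set (Z : {set V}) (l : option A) : {set V} :=
  [set z | [exists z', (z' \in Z) && e z' l z]].

Definition refine_step (L : {set {set V}}) : {set {set V}} :=
  foldl refine_by L [seq succ_set Z l | Z <- enum L, l <- enum {: option A}].

Definition fwd_output (L0 L : {set {set V}}) : Prop :=
  exists i, L = iter i refine_step L0 /\ refine_step L = L.

Definition same_block (L : {set {set V}}) (v w : V) : Prop :=
  exists2 B, B \in L & (v \in B) && (w \in B).
End NFA.

(* Main.v *)
Require Import Defs.
From mathcomp Require Import all_boot.

Section Aux.
Local Set Implicit Arguments.
Variables (A V : finType) (e : V -> option A -> V -> bool).

Lemma refine_memP (P : {set {set V}}) (Y B' : {set V}) :
  B' \in refine_by P Y ->
  exists2 B, B \in P & (B' \subset B).
Proof.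
rewrite /refine_by !inE => /andP[_ /orP[]] /imsetP[B HB ->];
  exists B => //; [exact: subsetIl | exact: subsetDl].
Qed.

Lemma refine_cover (P : {set {set V}}) (Y : {set V}) x :
  (exists2 B, B \in P & x \in B) -> exists2 B, B \in refine_by P Y & x \in B.
Proof.
case=> B HB xB; case xY: (x \in Y).
- exists (B :&: Y); last by rewrite inE xB xY.
  rewrite /refine_by !inE; apply/andP; split.
    by apply/set0Pn; exists x; rewrite inE xB xY.
  by apply/orP; left; apply: imset_f.
- exists (B :\: Y); last by rewrite inE xB xY.
  rewrite /refine_by !inE; apply/andP; split.
    by apply/set0Pn; exists x; rewrite inE xB xY.
  by apply/orP; right; apply: imset_f.
Qed.

Definition stab (P : {set {set V}}) (y : {set V}) :=
  forall B, B \in P -> forall a b, a \in B -> b \in B -> (a \in y) = (b \in y).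

Lemma stab_refine P y Y : stab P y -> stab (refine_by P Y) y.
Proof.
move=> H B' /refine_memP[B HB sub] a b aB bB.
by apply: (H B HB); apply: (subsetP sub).
Qed.

Lemma stab_self P Y : stab (refine_by P Y) Y.
Proof.
move=> B'; rewrite /refine_by !inE => /andP[_ /orP[]] /imsetP[B HB ->] a b;
  rewrite !inE => /andP[Ha1 Ha2] /andP[Hb1 Hb2].
  by rewrite Ha2 Hb2.
by rewrite (negbTE Ha1) (negbTE Hb1).
Qed.

Lemma foldl_stab (ys : seq {set V}) P :
  forall y, y \in ys -> stab (foldl (@refine_by V) P ys) y.
Proof.
elim: ys P => [|y0 ys IH] P y //=; rewrite inE => /orP[/eqP ->|Hy]; last exact: IH.
have : stab (refine_by P y0) y0 by apply: stab_self.
elim: ys {IH} (refine_by P y0) => [|y1 ys IH2] Q //= HQ.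
by apply: IH2; apply: stab_refine.
Qed.

Definition inv (vs : V) (P : {set {set V}}) :=
  (forall x, exists2 B, B \in P & x \in B) /\
  (forall B, B \in P -> vs \in B -> B = [set vs]).

Lemma inv_refine vs P Y : inv vs P -> inv vs (refine_by P Y).
Proof.
case=> Hc Hs; split; first by move=> x; apply: refine_cover.
move=> B' HB' vB'.
have HB'0 : B' != set0 by move: HB'; rewrite /refine_by !inE => /andP[].
case/refine_memP: HB' => B HB sub.
have eB := Hs B HB (subsetP sub _ vB').
apply/setP=> z; rewrite inE; apply/idP/idP; last by move/eqP->.
by move=> zB; move: (subsetP sub _ zB); rewrite eB inE.
Qed.

Lemma inv_foldl vs ys P : inv vs P -> inv vs (foldl (@refine_by V) P ys).
Proof. by elim: ys P => [|y ys IH] P //= H; apply: IH; apply: inv_refine. Qed.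

Lemma inv_iter vs i P : inv vs P -> inv vs (iter i (refine_step e) P).
Proof.
elim: i => [|i IH] //= H; rewrite /refine_step; apply: inv_foldl; exact: IH.
Qed.

Lemma reach_rcons u tau l w :
  reachable e u (rcons tau l) w = [exists z, reachable e u tau z && e z l w].
Proof.
elim: tau u => [|l0 tau IH] u /=.
- apply/existsP/existsP => [[v /andP[H /eqP <-]]|[z /andP[/eqP <- H]]];
    by [exists u; rewrite eqxx | exists w; rewrite H eqxx].
- apply/existsP/existsP => [[v /andP[H1]]|[z /andP[/existsP[v /andP[H1 H2]] H3]]].
  + rewrite IH => /existsP[z /andP[H2 H3]]; exists z; rewrite H3 andbT.
    by apply/existsP; exists v; rewrite H1.
  + exists v; rewrite H1 IH /=; apply/existsP; exists z; by rewrite H2.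
Qed.

End Aux.

Theorem mainTheorem7 (A V : finType) (e : V -> option A -> V -> bool)
  (vs : V) (L0 L : {set {set V}}) :
  partition L0 [set: V] ->
  [set vs] \in L0 ->
  fwd_output e L0 L ->
  forall v w : V, same_block L v w -> fwd_equiv e vs v w.
Proof.
move=> Hp Hvs [i [HL Hfix]].
have Hinv0 : inv vs L0.
  case/and3P: Hp => /eqP Hcov Htriv _; split.
  - move=> x; have : x \in cover L0 by rewrite Hcov inE.
    by case/bigcupP=> B HB xB; exists B.
  - move=> B HB vB.
    by rewrite -(def_pblock Htriv HB vB) (def_pblock Htriv Hvs) ?set11.
have [Hc Hs] : inv vs L by rewrite HL; apply: inv_iter.
have Hst : forall Z l, Z \in L -> stab L (succ_set e Z l).
  move=> Z l HZ; rewrite -{1}Hfix /refine_step; apply: foldl_stab.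
  apply/flatten_mapP; exists Z; first by rewrite mem_enum.
  by apply/mapP; exists l; rewrite ?mem_enum.
have key : forall tau B, B \in L -> forall a b, a \in B -> b \in B ->
    reachable e vs tau a -> reachable e vs tau b.
  elim/last_ind => [|tau l IH] B HB a b aB bB /=.
    move/eqP => Ea; subst a; have := Hs B HB aB; move=> EB.
    by move: bB; rewrite EB inE => /eqP ->.
  rewrite !reach_rcons => /existsP[z /andP[Rz Ezl]].
  case: (Hc z) => Z HZ zZ.
  have Ha : a \in succ_set e Z l by rewrite inE; apply/existsP; exists z; rewrite zZ.
  have Hb : b \in succ_set e Z l by rewrite -(Hst Z l HZ B HB a b aB bB).
  move: Hb; rewrite inE => /existsP[z' /andP[z'Z Ez']].
  apply/existsP; exists z'; rewrite Ez' andbT.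
  exact: (IH Z HZ z z' zZ z'Z Rz).
move=> v w [B HB /andP[vB wB]] tau.
apply/idP/idP; [exact: key vB wB | exact: key wB vB].
Qed.
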